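(* Fix $D,\alpha,\theta>0$. There is a constant $c=c(D,\alpha,\theta)>0$ such that for every finite connected graph $G$ on $n$ vertices satisfying (bal), (mix), (esc) with parameters $D,\alpha,\theta$, with $n$ sufficiently large, the following holds. Let $u$ be a $\pi$-distributed vertex and, given $u$, let $X,Y$ be two independent lazy random walks started at $u$. Then $$\Pr\left(X[0,r]\cap Y[1,r]=\varnothing\right)\ge c.$$
   Context: For a finite connected graph $G=(V,E)$ with $n$ vertices, $d(v)$ is the degree of $v$, $\delta(G),\Delta(G)$ are the minimum and maximum degrees. The lazy random walk $(X_t)$ on $G$ at each step stays put with probability $1/2$ and otherwise moves along a uniformly chosen edge incident to the current vertex. Write $\mathbf p^t(u,v)=\Pr_u(X_t=v)$ and $\pi(v)=d(v)/(2|E|)$. The uniform mixing time is $t_{\mathrm{mix}}(G)=\min\{t\ge0:\max_{u,v\in V}|\mathbf p^t(u,v)/\pi(v)-1|\le 1/2\}$, and the bubble sum is $\mathcal B(G)=\sum_{t=0}^{t_{\mathrm{mix}}(G)}(t+1)\sup_{v}\mathbf p^t(v,v)$. Assumptions with parameters $D,\alpha,\theta>0$: (bal) $\Delta(G)/\delta(G)\le D$; (mix) $t_{\mathrm{mix}}(G)\le n^{1/2-\alpha}$; (esc) $\mathcal B(G)\le\theta$. The run time is $r=n^{1/2-\alpha/3}$ (rounded to an integer). For a walk $X$ and integers $a\le b$, $X[a,b]$ denotes the set $\{X_i: a\le i\le b\}$. *)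

(* Defs.v *)
From Stdlib Require Import Reals Lra Lia Arith List Relations.
Open Scope R_scope.

Definition rsum (n : nat) (f : nat -> R) : R :=
  fold_right (fun v acc => f v + acc) 0 (seq 0 n).

(* maximum over v = 0 .. n-1 of nonnegative quantities (0 if n = 0) *)
Definition rmax (n : nat) (f : nat -> R) : R :=
  fold_right (fun v acc => Rmax (f v) acc) 0 (seq 0 n).

Definition simple_graph (n : nat) (adj : nat -> nat -> bool) : Prop :=
  (forall u v, adj u v = adj v u) /\ (forall u, adj u u = false).

Definition connected (n : nat) (adj : nat -> nat -> bool) : Prop :=
  (0 < n)%nat /\
  forall u v, (u < n)%nat -> (v < n)%nat ->
    clos_refl_trans nat (fun a b => (a < n)%nat /\ (b < n)%nat /\ adj a b = true) u v.

Definition deg (n : nat) (adj : nat -> nat -> bool) (v : nat) : nat :=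
  length (filter (fun w => adj v w) (seq 0 n)).

Definition twoE (n : nat) (adj : nat -> nat -> bool) : R :=
  rsum n (fun v => INR (deg n adj v)).

Definition pi_ (n : nat) (adj : nat -> nat -> bool) (v : nat) : R :=
  INR (deg n adj v) / twoE n adj.

Definition P1 (n : nat) (adj : nat -> nat -> bool) (v w : nat) : R :=
  (if Nat.eqb v w then / 2 else 0) +
  (if adj v w then / (2 * INR (deg n adj v)) else 0).

Fixpoint pt (n : nat) (adj : nat -> nat -> bool) (t : nat) (u v : nat) : R :=
  match t with
  | O => if Nat.eqb u v then 1 else 0
  | S t' => rsum n (fun w => pt n adj t' u w * P1 n adj w v)
  end.

Definition mixed (n : nat) (adj : nat -> nat -> bool) (t : nat) : Prop :=
  forall u v, (u < n)%nat -> (v < n)%nat ->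
    Rabs (pt n adj t u v / pi_ n adj v - 1) <= / 2.

Definition is_tmix (n : nat) (adj : nat -> nat -> bool) (T : nat) : Prop :=
  mixed n adj T /\ forall t, (t < T)%nat -> ~ mixed n adj t.

Definition bubble (n : nat) (adj : nat -> nat -> bool) (T : nat) : R :=
  rsum (S T) (fun t => INR (S t) * rmax n (fun v => pt n adj t v v)).

Fixpoint sumseq (n : nat) (k : nat) (f : list nat -> R) : R :=
  match k with
  | O => f nil
  | S k' => rsum n (fun v => sumseq n k' (fun s => f (v :: s)))
  end.

Fixpoint wt (n : nat) (adj : nat -> nat -> bool) (u : nat) (xs : list nat) : R :=
  match xs with
  | nil => 1
  | x :: xs' => P1 n adj u x * wt n adj x xs'
  end.

Definition disjointb (a b : list nat) : bool :=
  forallb (fun x => negb (existsb (Nat.eqb x) b)) a.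

(* Pr( X[0,r] ∩ Y[1,r] = ∅ ), u ~ pi, X, Y independent lazy walks from u *)
Definition nonint_prob (n : nat) (adj : nat -> nat -> bool) (r : nat) : R :=
  rsum n (fun u => pi_ n adj u *
    sumseq n r (fun xs => sumseq n r (fun ys =>
      wt n adj u xs * wt n adj u ys *
      (if disjointb (u :: xs) ys then 1 else 0)))).

Definition run_time (n : nat) (alpha : R) : nat :=
  Z.to_nat (Int_part (Rpower (INR n) (/ 2 - alpha / 3))).

(* Main.v *)
Require Import Defs.
From Stdlib Require Import Reals Lra Lia Arith List Relations ZArith.
Open Scope R_scope.

Definition lsum (l : list nat) (f : nat -> R) : R :=
  fold_right (fun v acc => f v + acc) 0 l.

Lemma rsum_lsum n f : rsum n f = lsum (seq 0 n) f.
Proof. reflexivity. Qed.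

Lemma lsum_ext_in l f g : (forall v, In v l -> f v = g v) -> lsum l f = lsum l g.
Proof. induction l; simpl; intros H; auto. rewrite H by auto. rewrite IHl; auto. Qed.

Lemma lsum_le_in l f g : (forall v, In v l -> f v <= g v) -> lsum l f <= lsum l g.
Proof. induction l; simpl; intros H. lra. pose proof (H a (or_introl eq_refl)).
  assert (lsum l f <= lsum l g) by (apply IHl; auto). lra. Qed.

Lemma lsum_plus l f g : lsum l (fun v => f v + g v) = lsum l f + lsum l g.
Proof. induction l; simpl; [lra|]. rewrite IHl; lra. Qed.

Lemma lsum_scal l c f : lsum l (fun v => c * f v) = c * lsum l f.
Proof. induction l; simpl; [lra|]. rewrite IHl; lra. Qed.

Lemma lsum_zero l : lsum l (fun _ => 0) = 0.
Proof. induction l; simpl; [lra|]. rewrite IHl; lra. Qed.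

Lemma lsum_const l c : lsum l (fun _ => c) = INR (length l) * c.
Proof. induction l; simpl length; simpl lsum; [simpl; lra|]. rewrite IHl, S_INR; lra. Qed.

Lemma lsum_exchange l1 l2 (f : nat -> nat -> R) :
  lsum l1 (fun i => lsum l2 (f i)) = lsum l2 (fun j => lsum l1 (fun i => f i j)).
Proof. induction l1; simpl. rewrite lsum_zero; auto.
  rewrite IHl1, <- lsum_plus. reflexivity. Qed.

Lemma lsum_ge_term l f k : (forall v, In v l -> 0 <= f v) -> In k l -> f k <= lsum l f.
Proof. induction l; simpl; intros H Hk; [contradiction|].
  assert (0 <= lsum l f). { rewrite <- (lsum_zero l). apply lsum_le_in; auto. }
  destruct Hk as [<-|Hk]. pose proof (H a (or_introl eq_refl)); lra.
  assert (f k <= lsum l f) by auto. pose proof (H a (or_introl eq_refl)); lra. Qed.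

Lemma lsum_nonneg l f : (forall v, In v l -> 0 <= f v) -> 0 <= lsum l f.
Proof. intros. rewrite <- (lsum_zero l). apply lsum_le_in; auto. Qed.

Lemma lsum_delta l v c : NoDup l -> In v l -> lsum l (fun w => if Nat.eqb v w then c else 0) = c.
Proof. induction l; simpl; intros Hd Hv; [contradiction|]. inversion Hd; subst.
  destruct Hv as [Heq|Hv].
  - subst a. rewrite Nat.eqb_refl. rewrite (lsum_ext_in l _ (fun _ => 0)). rewrite lsum_zero; lra.
    intros w Hw. destruct (Nat.eqb_spec v w); subst; auto. contradiction.
  - destruct (Nat.eqb_spec v a); subst. contradiction. rewrite IHl; auto; lra. Qed.

Lemma rsum_ext_in n f g : (forall v, (v < n)%nat -> f v = g v) -> rsum n f = rsum n g.
Proof. intros; rewrite !rsum_lsum; apply lsum_ext_in; intros v Hv; apply in_seq in Hv; apply H; lia. Qed.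
Lemma rsum_le_in n f g : (forall v, (v < n)%nat -> f v <= g v) -> rsum n f <= rsum n g.
Proof. intros; rewrite !rsum_lsum; apply lsum_le_in; intros v Hv; apply in_seq in Hv; apply H; lia. Qed.
Lemma rsum_plus n f g : rsum n (fun v => f v + g v) = rsum n f + rsum n g.
Proof. apply lsum_plus. Qed.
Lemma rsum_scal n c f : rsum n (fun v => c * f v) = c * rsum n f.
Proof. apply lsum_scal. Qed.
Lemma rsum_zero n : rsum n (fun _ => 0) = 0.
Proof. apply lsum_zero. Qed.
Lemma rsum_const n c : rsum n (fun _ => c) = INR n * c.
Proof. rewrite rsum_lsum, lsum_const, length_seq; auto. Qed.
Lemma rsum_exchange n m (f : nat -> nat -> R) :
  rsum n (fun i => rsum m (f i)) = rsum m (fun j => rsum n (fun i => f i j)).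
Proof. apply lsum_exchange. Qed.
Lemma rsum_ge_term n f k : (forall v, (v < n)%nat -> 0 <= f v) -> (k < n)%nat -> f k <= rsum n f.
Proof. intros; rewrite rsum_lsum; apply lsum_ge_term. intros v Hv; apply in_seq in Hv; apply H; lia.
  apply in_seq; lia. Qed.
Lemma rsum_nonneg n f : (forall v, (v < n)%nat -> 0 <= f v) -> 0 <= rsum n f.
Proof. intros; rewrite rsum_lsum; apply lsum_nonneg. intros v Hv; apply in_seq in Hv; apply H; lia. Qed.
Lemma rsum_delta n v c : (v < n)%nat -> rsum n (fun w => if Nat.eqb v w then c else 0) = c.
Proof. intros; rewrite rsum_lsum; apply lsum_delta. apply seq_NoDup. apply in_seq; lia. Qed.

Lemma rmax_ge n f v : (v < n)%nat -> f v <= rmax n f.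
Proof. intros H. unfold rmax. assert (Hi : In v (seq 0 n)) by (apply in_seq; lia).
  induction (seq 0 n); simpl in *; [contradiction|]. destruct Hi as [<-|Hi].
  apply Rmax_l. eapply Rle_trans; [apply IHl; auto| apply Rmax_r]. Qed.

Lemma sumseq_ext n k f g : (forall l, f l = g l) -> sumseq n k f = sumseq n k g.
Proof. revert f g; induction k; simpl; intros f g H; auto.
  apply rsum_ext_in; intros; apply IHk; auto. Qed.

Lemma sumseq_ext_len n k f g : (forall l, length l = k -> f l = g l) -> sumseq n k f = sumseq n k g.
Proof. revert f g; induction k; simpl; intros f g H; auto.
  apply rsum_ext_in; intros; apply IHk; intros; apply H; simpl; auto. Qed.

Lemma sumseq_le_len n k f g : (forall l, length l = k -> f l <= g l) -> sumseq n k f <= sumseq n k g.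
Proof. revert f g; induction k; simpl; intros f g H. apply H; auto.
  apply rsum_le_in; intros; apply IHk; intros; apply H; simpl; auto. Qed.

Lemma sumseq_plus n k f g : sumseq n k (fun s => f s + g s) = sumseq n k f + sumseq n k g.
Proof. revert f g; induction k; simpl; intros; auto. rewrite <- rsum_plus.
  apply rsum_ext_in; intros; apply IHk. Qed.

Lemma sumseq_scal n k c f : sumseq n k (fun s => c * f s) = c * sumseq n k f.
Proof. revert f; induction k; simpl; intros; auto. rewrite <- rsum_scal.
  apply rsum_ext_in; intros; apply IHk. Qed.

Lemma sumseq_zero n k : sumseq n k (fun _ => 0) = 0.
Proof. induction k; simpl; auto. rewrite (rsum_ext_in _ _ (fun _ => 0)). apply rsum_zero. auto. Qed.

Lemma sumseq_rsum n k m (f : nat -> list nat -> R) :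
  sumseq n k (fun s => rsum m (fun i => f i s)) = rsum m (fun i => sumseq n k (f i)).
Proof. revert f; induction k; simpl; intros; auto.
  rewrite (rsum_ext_in n _ (fun v => rsum m (fun i => sumseq n k (fun s => f i (v :: s))))).
  apply rsum_exchange. intros; apply IHk. Qed.

Lemma sumseq_exchange n a b (f : list nat -> list nat -> R) :
  sumseq n a (fun s => sumseq n b (fun t => f s t)) = sumseq n b (fun t => sumseq n a (fun s => f s t)).
Proof. revert f; induction a; simpl; intros; auto.
  rewrite (rsum_ext_in n _ (fun v => sumseq n b (fun t => sumseq n a (fun s => f (v :: s) t)))).
  symmetry. apply sumseq_rsum. intros; apply IHa. Qed.

Lemma sumseq_app n a b f : sumseq n (a + b) f = sumseq n a (fun s => sumseq n b (fun t => f (s ++ t))).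
Proof. revert f; induction a; simpl; intros; auto. apply rsum_ext_in; intros; apply IHa. Qed.

Lemma count_deg (n : nat) (adj : nat -> nat -> bool) (v : nat) : rsum n (fun w => if adj v w then 1 else 0) = INR (deg n adj v).
Proof. unfold deg. rewrite rsum_lsum. induction (seq 0 n); simpl; [auto|].
  destruct (adj v a); simpl length; rewrite IHl; try rewrite S_INR; lra. Qed.

Lemma inv_nonneg x : 0 <= x -> 0 <= / x.
Proof. intros H. destruct (Req_dec x 0) as [->|]. rewrite Rinv_0; lra.
  left; apply Rinv_0_lt_compat; lra. Qed.

Lemma P1_nonneg (n : nat) (adj : nat -> nat -> bool) (v w : nat) : 0 <= P1 n adj v w.
Proof. unfold P1. assert (0 <= / (2 * INR (deg n adj v))).
  apply inv_nonneg. pose proof (pos_INR (deg n adj v)); lra.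
  destruct (Nat.eqb v w), (adj v w); lra. Qed.

Lemma pt_nonneg (n : nat) (adj : nat -> nat -> bool) (t u v : nat) : 0 <= pt n adj t u v.
Proof. revert v; induction t; simpl; intros. destruct (Nat.eqb u v); lra.
  apply rsum_nonneg; intros. apply Rmult_le_pos; auto. apply P1_nonneg. Qed.

Lemma wt_nonneg (n : nat) (adj : nat -> nat -> bool) (u : nat) xs : 0 <= wt n adj u xs.
Proof. revert u; induction xs; simpl; intros. lra. apply Rmult_le_pos; auto. apply P1_nonneg. Qed.

Section G.
Variable n : nat.
Variable adj : nat -> nat -> bool.

Definition degpos := forall v, (v < n)%nat -> (0 < deg n adj v)%nat.

Lemma P1_sum v : degpos -> (v < n)%nat -> rsum n (fun w => P1 n adj v w) = 1.
Proof. intros Hd Hv. unfold P1. rewrite rsum_plus.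
  rewrite (rsum_ext_in n (fun w => if adj v w then _ else 0) (fun w => / (2 * INR (deg n adj v)) * (if adj v w then 1 else 0))).
  rewrite rsum_scal, count_deg, rsum_delta by auto.
  assert (0 < INR (deg n adj v)) by (apply lt_0_INR; auto). field; lra.
  intros; destruct (adj v v0); lra. Qed.

Lemma pt_CK a b u v : (v < n)%nat ->
  pt n adj (a + b) u v = rsum n (fun w => pt n adj a u w * pt n adj b w v).
Proof. revert v; induction b; intros v Hv.
  - rewrite Nat.add_0_r. simpl.
    rewrite (rsum_ext_in n _ (fun w => if Nat.eqb v w then pt n adj a u v else 0)).
    rewrite rsum_delta; auto. intros w _. destruct (Nat.eqb_spec w v), (Nat.eqb_spec v w); subst; try lra; congruence.
  - rewrite Nat.add_succ_r. simpl.
    rewrite (rsum_ext_in n _ (fun y => rsum n (fun w => pt n adj a u w * pt n adj b w y * P1 n adj y v))).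
    rewrite rsum_exchange. apply rsum_ext_in; intros w _. rewrite <- rsum_scal.
    apply rsum_ext_in; intros; lra.
    intros y Hy. rewrite IHb by auto. rewrite Rmult_comm, <- rsum_scal. apply rsum_ext_in; intros; lra. Qed.

Lemma pt_front t u v : (u < n)%nat -> (v < n)%nat ->
  pt n adj (S t) u v = rsum n (fun w => P1 n adj u w * pt n adj t w v).
Proof. intros Hu Hv. change (S t) with (1 + t)%nat. rewrite pt_CK by auto.
  apply rsum_ext_in; intros w Hw. f_equal. simpl.
  rewrite (rsum_ext_in n _ (fun y => if Nat.eqb u y then P1 n adj u w else 0)).
  apply rsum_delta; auto. intros y _. destruct (Nat.eqb_spec u y); subst; lra. Qed.

Lemma pt_rowsum s w : degpos -> (w < n)%nat -> rsum n (fun z => pt n adj s w z) = 1.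
Proof. intros Hd Hw. induction s; simpl.
  - apply rsum_delta; auto.
  - rewrite rsum_exchange. rewrite <- IHs. apply rsum_ext_in; intros y Hy.
    rewrite rsum_scal, P1_sum by auto. lra. Qed.

Hypothesis Hsym : forall u v, adj u v = adj v u.

Lemma twoE_pos : degpos -> (0 < n)%nat -> 0 < twoE n adj.
Proof. intros Hd Hn. unfold twoE. apply Rlt_le_trans with (INR (deg n adj 0)).
  apply lt_0_INR; auto. apply (rsum_ge_term n (fun v => INR (deg n adj v)) 0); auto.
  intros; apply pos_INR. Qed.

Lemma pi_nonneg v : 0 <= pi_ n adj v.
Proof. unfold pi_. apply Rmult_le_pos. apply pos_INR. apply inv_nonneg.
  unfold twoE. apply rsum_nonneg; intros; apply pos_INR. Qed.

Lemma pi_sum : degpos -> (0 < n)%nat -> rsum n (fun v => pi_ n adj v) = 1.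
Proof. intros Hd Hn. unfold pi_. rewrite (rsum_ext_in n _ (fun v => / twoE n adj * INR (deg n adj v))).
  rewrite rsum_scal. fold (twoE n adj). pose proof (twoE_pos Hd Hn). field; lra.
  intros; unfold Rdiv; lra. Qed.

Lemma P1_db u v : degpos -> (0 < n)%nat -> (u < n)%nat -> (v < n)%nat ->
  pi_ n adj u * P1 n adj u v = pi_ n adj v * P1 n adj v u.
Proof. intros Hd Hn Hu Hv. pose proof (twoE_pos Hd Hn).
  assert (0 < INR (deg n adj u)) by (apply lt_0_INR; auto).
  assert (0 < INR (deg n adj v)) by (apply lt_0_INR; auto).
  unfold P1, pi_. rewrite (Hsym v u).
  destruct (Nat.eqb_spec u v). subst. rewrite Nat.eqb_refl. reflexivity.
  destruct (Nat.eqb_spec v u). congruence.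
  destruct (adj u v); field; lra. Qed.

Lemma pt_db t u v : degpos -> (0 < n)%nat -> (u < n)%nat -> (v < n)%nat ->
  pi_ n adj u * pt n adj t u v = pi_ n adj v * pt n adj t v u.
Proof. intros Hd Hn. revert u v; induction t; intros u v Hu Hv.
  - simpl. destruct (Nat.eqb_spec u v), (Nat.eqb_spec v u); subst; try lra; congruence.
  - rewrite (pt_front t v u) by auto. simpl. rewrite <- !rsum_scal. apply rsum_ext_in; intros w Hw.
    rewrite <- Rmult_assoc, IHt by auto.
    replace (pi_ n adj w * pt n adj t w u * P1 n adj w v) with (pt n adj t w u * (pi_ n adj w * P1 n adj w v)) by ring.
    rewrite P1_db by auto. ring. Qed.

Lemma pt_rev i j w : degpos -> (0 < n)%nat -> (w < n)%nat ->
  rsum n (fun u => pi_ n adj u * pt n adj i u w * pt n adj j u w) = pi_ n adj w * pt n adj (i + j) w w.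
Proof. intros Hd Hn Hw. rewrite pt_CK, <- rsum_scal by auto. apply rsum_ext_in; intros u Hu.
  rewrite pt_db by auto. lra. Qed.

End G.

Fixpoint lastv (u : nat) (s : list nat) : nat :=
  match s with nil => u | v :: s' => lastv v s' end.

Lemma nth_lastv (u : nat) (s t : list nat) : nth (length s) (u :: s ++ t) 0%nat = lastv u s.
Proof. revert u; induction s; intros; [reflexivity| apply IHs]. Qed.

Lemma skipn_lastv (u : nat) (s t : list nat) : skipn (S (length s)) (u :: s ++ t) = t.
Proof. simpl. induction s; simpl; auto. Qed.

Lemma lastv_lt n u s : (u < n)%nat -> Forall (fun x => (x < n)%nat) s -> (lastv u s < n)%nat.
Proof. revert u; induction s; simpl; intros; auto. inversion H0; auto. Qed.

Section M.
Variable n : nat.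
Variable adj : nat -> nat -> bool.

Lemma wt_app u s t : wt n adj u (s ++ t) = wt n adj u s * wt n adj (lastv u s) t.
Proof. revert u; induction s; simpl; intros. lra. rewrite IHs; lra. Qed.

Lemma wt_sum k u : degpos n adj -> (u < n)%nat -> sumseq n k (fun s => wt n adj u s) = 1.
Proof. intros Hd. revert u; induction k; simpl; intros u Hu; auto.
  rewrite (rsum_ext_in n _ (fun v => P1 n adj u v)). apply P1_sum; auto.
  intros v Hv. rewrite sumseq_scal, IHk; auto; lra. Qed.

Lemma prefix_lemma i u (g : nat -> R) : (u < n)%nat ->
  sumseq n i (fun s => wt n adj u s * g (lastv u s)) = rsum n (fun w => pt n adj i u w * g w).
Proof. revert u; induction i; intros u Hu.
  - simpl. rewrite (rsum_ext_in n _ (fun w => if Nat.eqb u w then g u else 0)). rewrite rsum_delta; auto; lra.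
    intros w _; destruct (Nat.eqb_spec u w); subst; lra.
  - transitivity (rsum n (fun w => rsum n (fun v => P1 n adj u v * pt n adj i v w * g w))).
    + rewrite rsum_exchange. change (sumseq n (S i) ?f) with (rsum n (fun v => sumseq n i (fun s => f (v::s)))).
      apply rsum_ext_in; intros v Hv.
      rewrite (rsum_ext_in n _ (fun w => P1 n adj u v * (pt n adj i v w * g w))) by (intros; lra).
      rewrite rsum_scal, <- IHi, <- sumseq_scal by auto. apply sumseq_ext; intros; simpl; lra.
    + apply rsum_ext_in; intros w Hw. rewrite pt_front by auto. rewrite Rmult_comm, <- rsum_scal.
      apply rsum_ext_in; intros; lra. Qed.

Lemma markov1 L i u (F : nat -> list nat -> R) : (u < n)%nat -> (i <= L)%nat ->
  sumseq n L (fun xs => wt n adj u xs * F (nth i (u :: xs) 0%nat) (skipn (S i) (u :: xs))) =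
  rsum n (fun w => pt n adj i u w * sumseq n (L - i) (fun t => wt n adj w t * F w t)).
Proof. intros Hu Hi. replace L with (i + (L - i))%nat at 1 by lia. rewrite sumseq_app.
  rewrite <- (prefix_lemma i u (fun w => sumseq n (L - i) (fun t => wt n adj w t * F w t))) by auto.
  apply sumseq_ext_len; intros s Hs. rewrite <- sumseq_scal. apply sumseq_ext; intros t.
  subst i. rewrite nth_lastv, skipn_lastv, wt_app. lra. Qed.

Lemma marg r k w (F : list nat -> R) : degpos n adj -> (w < n)%nat ->
  sumseq n (r + k) (fun t => wt n adj w t * F (firstn r t)) = sumseq n r (fun t => wt n adj w t * F t).
Proof. intros Hd. revert w F; induction r; intros w F Hw; simpl.
  - rewrite (sumseq_ext n k _ (fun t => F nil * wt n adj w t)), sumseq_scal, wt_sum; auto; try lra.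
    intros; lra.
  - apply rsum_ext_in; intros v Hv.
    rewrite (sumseq_ext n (r + k) _ (fun t => P1 n adj w v * (wt n adj v t * F (v :: firstn r t)))).
    rewrite sumseq_scal, (IHr v (fun t => F (v :: t))) by auto. rewrite <- sumseq_scal.
    apply sumseq_ext; intros; lra. intros; lra. Qed.

End M.

Definition indn (a b : nat) : R := if Nat.eqb a b then 1 else 0.

Section E.
Variable n : nat.
Variable adj : nat -> nat -> bool.
Variable L : nat.

Definition Ex (F : list nat -> list nat -> R) : R :=
  rsum n (fun u => pi_ n adj u * sumseq n L (fun xs => sumseq n L (fun ys =>
     wt n adj u xs * wt n adj u ys * F (u :: xs) (u :: ys)))).

Definition Qf i j (G : nat -> list nat -> list nat -> R) w :=
  sumseq n (L - i) (fun t1 => sumseq n (L - j) (fun t2 => wt n adj w t1 * wt n adj w t2 * G w t1 t2)).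

Lemma ML_u u i j G : (u < n)%nat -> (i <= L)%nat -> (j <= L)%nat ->
  sumseq n L (fun xs => sumseq n L (fun ys => wt n adj u xs * wt n adj u ys *
    (indn (nth i (u :: xs) 0%nat) (nth j (u :: ys) 0%nat) *
     G (nth i (u :: xs) 0%nat) (skipn (S i) (u :: xs)) (skipn (S j) (u :: ys)))))
  = rsum n (fun w => pt n adj i u w * pt n adj j u w * Qf i j G w).
Proof. intros Hu Hi Hj.
  set (Phi := fun a t1 => sumseq n L (fun ys => wt n adj u ys *
      (indn a (nth j (u :: ys) 0%nat) * G a t1 (skipn (S j) (u :: ys))))).
  transitivity (sumseq n L (fun xs => wt n adj u xs * Phi (nth i (u :: xs) 0%nat) (skipn (S i) (u :: xs)))).
  { apply sumseq_ext; intros xs. unfold Phi. rewrite <- sumseq_scal. apply sumseq_ext; intros; lra. }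
  rewrite (markov1 n adj L i u Phi) by auto. apply rsum_ext_in; intros w1 Hw1.
  unfold Qf. rewrite Rmult_assoc. f_equal. rewrite <- sumseq_scal. apply sumseq_ext; intros t1.
  unfold Phi; cbv beta. rewrite (markov1 n adj L j u (fun b t2 => indn w1 b * G w1 t1 t2)) by auto.
  rewrite (rsum_ext_in n _ (fun w2 => if Nat.eqb w1 w2 then pt n adj j u w1 * sumseq n (L - j) (fun t2 => wt n adj w1 t2 * G w1 t1 t2) else 0)).
  rewrite rsum_delta by auto. rewrite <- !sumseq_scal. apply sumseq_ext; intros; lra.
  intros w2 Hw2. unfold indn. destruct (Nat.eqb_spec w1 w2).
  - subst. f_equal. apply sumseq_ext; intros; lra.
  - rewrite (sumseq_ext n _ _ (fun _ => 0)), sumseq_zero. lra. intros; lra. Qed.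

Lemma ML i j G : (forall a b, adj a b = adj b a) -> degpos n adj -> (0 < n)%nat -> (i <= L)%nat -> (j <= L)%nat ->
  Ex (fun X Y => indn (nth i X 0%nat) (nth j Y 0%nat) * G (nth i X 0%nat) (skipn (S i) X) (skipn (S j) Y))
  = rsum n (fun w => pi_ n adj w * pt n adj (i + j) w w * Qf i j G w).
Proof. intros Hs Hd Hn Hi Hj. unfold Ex.
  rewrite (rsum_ext_in n _ (fun u => rsum n (fun w => pi_ n adj u * pt n adj i u w * pt n adj j u w * Qf i j G w))).
  rewrite rsum_exchange. apply rsum_ext_in; intros w Hw.
  rewrite (rsum_ext_in n _ (fun u => Qf i j G w * (pi_ n adj u * pt n adj i u w * pt n adj j u w))) by (intros; lra).
  rewrite rsum_scal, pt_rev by auto. lra.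
  intros u Hu. rewrite ML_u by auto. rewrite <- rsum_scal. apply rsum_ext_in; intros; lra. Qed.

Lemma Ex_plus F G : Ex (fun X Y => F X Y + G X Y) = Ex F + Ex G.
Proof. unfold Ex. rewrite <- rsum_plus. apply rsum_ext_in; intros.
  rewrite <- Rmult_plus_distr_l, <- sumseq_plus. f_equal. apply sumseq_ext; intros.
  rewrite <- sumseq_plus. apply sumseq_ext; intros; lra. Qed.

Lemma Ex_rsum m (F : nat -> list nat -> list nat -> R) :
  Ex (fun X Y => rsum m (fun k => F k X Y)) = rsum m (fun k => Ex (F k)).
Proof. unfold Ex. rewrite rsum_exchange. apply rsum_ext_in; intros u Hu.
  rewrite rsum_scal. f_equal.
  rewrite <- (sumseq_rsum n L m (fun k xs => sumseq n L (fun ys => wt n adj u xs * wt n adj u ys * F k (u :: xs) (u :: ys)))).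
  apply sumseq_ext; intros xs.
  rewrite <- (sumseq_rsum n L m (fun k ys => wt n adj u xs * wt n adj u ys * F k (u :: xs) (u :: ys))).
  apply sumseq_ext; intros. rewrite <- rsum_scal. reflexivity. Qed.

Lemma Ex_mono F G : (forall u xs ys, (u < n)%nat -> length xs = L -> length ys = L ->
   F (u :: xs) (u :: ys) <= G (u :: xs) (u :: ys)) -> Ex F <= Ex G.
Proof. intros H. unfold Ex. apply rsum_le_in; intros u Hu. apply Rmult_le_compat_l. apply pi_nonneg.
  apply sumseq_le_len; intros xs Hx. apply sumseq_le_len; intros ys Hy.
  apply Rmult_le_compat_l. apply Rmult_le_pos; apply wt_nonneg. auto. Qed.

Lemma Ex_one : degpos n adj -> (0 < n)%nat -> Ex (fun _ _ => 1) = 1.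
Proof. intros Hd Hn. unfold Ex. transitivity (rsum n (fun u => pi_ n adj u)); [|apply pi_sum; auto]. apply rsum_ext_in; intros u Hu.
  rewrite (sumseq_ext n L _ (fun xs => wt n adj u xs * sumseq n L (fun ys => wt n adj u ys))).
  rewrite (wt_sum n adj L u) by auto. rewrite (sumseq_ext n L _ (fun xs => wt n adj u xs)) by (intros; lra). rewrite wt_sum by auto. lra.
  intros. rewrite <- sumseq_scal. apply sumseq_ext; intros; lra. Qed.

Lemma Ex_zero : Ex (fun _ _ => 0) = 0.
Proof. unfold Ex. transitivity (rsum n (fun _ => 0)); [|apply rsum_zero]. apply rsum_ext_in; intros.
  rewrite (sumseq_ext n L _ (fun _ => 0)), sumseq_zero. lra.
  intros. rewrite (sumseq_ext n L _ (fun _ => 0)), sumseq_zero. auto. intros; lra. Qed.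

End E.

Lemma in_firstn' (x : nat) k l : In x (firstn k l) -> In x l.
Proof. revert l; induction k; destruct l; simpl; intros H; try contradiction.
  destruct H; auto. Qed.
Lemma in_skipn' (x : nat) k l : In x (skipn k l) -> In x l.
Proof. revert l; induction k; destruct l; simpl; intros H; auto; contradiction. Qed.

Lemma disjointb_true a b : (forall x, In x a -> ~ In x b) -> disjointb a b = true.
Proof. intros H. unfold disjointb. apply forallb_forall. intros x Hx.
  apply Bool.negb_true_iff. destruct (existsb (Nat.eqb x) b) eqn:E; auto.
  apply existsb_exists in E. destruct E as [y [Hy Hxy]]. apply Nat.eqb_eq in Hxy; subst.
  exfalso; eapply H; eauto. Qed.

Lemma last_hit (l X : list nat) : (forall x, In x l -> ~ In x X) \/
  exists k, (k < length l)%nat /\ In (nth k l 0%nat) X /\ forall x, In x (skipn (S k) l) -> ~ In x X.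
Proof. induction l as [|a l IH]. left; simpl; tauto.
  destruct IH as [H|[k [Hk [Hin Hs]]]].
  - destruct (in_dec Nat.eq_dec a X).
    + right. exists 0%nat. simpl. split; [lia|]. split; auto.
    + left. simpl. intros x [<-|Hx]; auto.
  - right. exists (S k). simpl. split; [lia|]. split; auto. Qed.

Definition Gs (r : nat) (w : nat) (t1 t2 : list nat) : R :=
  if disjointb (w :: firstn r t1) (firstn r t2) then 1 else 0.
Definition Gone (w : nat) (t1 t2 : list nat) : R := 1.

Definition term i j (G : nat -> list nat -> list nat -> R) (X Y : list nat) : R :=
  indn (nth i X 0%nat) (nth j Y 0%nat) * G (nth i X 0%nat) (skipn (S i) X) (skipn (S j) Y).

Definition Bs T r X Y := rsum (S T) (fun t => rsum (S t) (fun i => term i (t - i) (Gs r) X Y)).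
Definition Bl T L X Y := rsum (S L) (fun i => rsum (S L) (fun j =>
   if Nat.ltb T (i + j) then term i j Gone X Y else 0)).

Lemma ind_nonneg a b : 0 <= indn a b.
Proof. unfold indn; destruct (Nat.eqb a b); lra. Qed.

Lemma term_nonneg i j G X Y : (forall a b c, 0 <= G a b c) -> 0 <= term i j G X Y.
Proof. intros; unfold term; apply Rmult_le_pos; auto; apply ind_nonneg. Qed.

Lemma Gs_nonneg r a b c : 0 <= Gs r a b c.
Proof. unfold Gs; destruct (disjointb _ _); lra. Qed.

Lemma Bs_nonneg T r X Y : 0 <= Bs T r X Y.
Proof. unfold Bs. apply rsum_nonneg; intros; apply rsum_nonneg; intros; apply term_nonneg, Gs_nonneg. Qed.

Lemma Bl_nonneg T L X Y : 0 <= Bl T L X Y.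
Proof. unfold Bl. apply rsum_nonneg; intros; apply rsum_nonneg; intros.
  destruct (Nat.ltb T _); [apply term_nonneg; unfold Gone; intros; lra | lra]. Qed.

Lemma comb T r L u xs ys : length xs = L -> length ys = L ->
  1 <= Bs T r (u :: xs) (u :: ys) + Bl T L (u :: xs) (u :: ys).
Proof. intros Hx Hy. set (X := u :: xs). set (Y := u :: ys).
  destruct (last_hit Y X) as [H|[J [HJ [Hin Hs]]]].
  { exfalso. apply (H u); simpl; auto. }
  destruct (In_nth X (nth J Y 0%nat) 0%nat Hin) as [I [HI HIJ]].
  assert (Ht : forall G, G (nth I X 0%nat) (skipn (S I) X) (skipn (S J) Y) = 1 -> term I J G X Y = 1).
  { intros G HG. unfold term. rewrite HG, HIJ. unfold indn. rewrite Nat.eqb_refl. lra. }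
  assert (LX : length X = S L) by (simpl; auto). assert (LY : length Y = S L) by (simpl; auto).
  pose proof (Bs_nonneg T r X Y). pose proof (Bl_nonneg T L X Y).
  destruct (Nat.leb_spec (I + J) T) as [Hle|Hlt].
  - assert (1 <= Bs T r X Y); [|lra].
    unfold Bs. eapply Rle_trans; [|apply (rsum_ge_term _ _ (I + J))].
    eapply Rle_trans; [|apply (rsum_ge_term _ _ I)].
    cbv beta. replace (I + J - I)%nat with J by lia. rewrite Ht. lra.
    unfold Gs. rewrite disjointb_true. auto.
    intros x Hx1 Hx2. apply (Hs x). apply in_firstn' in Hx2; auto.
    destruct Hx1 as [<-|Hx1]. apply nth_In; lia.
    apply in_firstn', in_skipn' in Hx1; auto.
    intros; apply term_nonneg, Gs_nonneg. lia.
    intros; apply rsum_nonneg; intros; apply term_nonneg, Gs_nonneg. lia.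
  - assert (1 <= Bl T L X Y); [|lra].
    unfold Bl. eapply Rle_trans; [|apply (rsum_ge_term _ _ I)].
    eapply Rle_trans; [|apply (rsum_ge_term _ _ J)].
    assert (Nat.ltb T (I + J) = true) as E by (apply Nat.ltb_lt; lia). cbv beta. rewrite E.
    rewrite Ht; unfold Gone; lra.
    intros; destruct (Nat.ltb T _); [apply term_nonneg; unfold Gone; intros; lra | lra]. lia.
    intros; apply rsum_nonneg; intros; destruct (Nat.ltb T _); [apply term_nonneg; unfold Gone; intros; lra | lra]. lia.
Qed.

Section K.
Variable n : nat.
Variable adj : nat -> nat -> bool.
Variables (D : R) (T r : nat).
Hypothesis Hsym : forall a b, adj a b = adj b a.
Hypothesis Hd : degpos n adj.
Hypothesis Hn : (0 < n)%nat.
Hypothesis Hmix : forall z w, (z < n)%nat -> (w < n)%nat -> pt n adj T z w <= 3/2 * pi_ n adj w.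
Hypothesis Hpi : forall w, (w < n)%nat -> pi_ n adj w <= D / INR n.

Definition qq w := sumseq n r (fun xs => sumseq n r (fun ys =>
      wt n adj w xs * wt n adj w ys * (if disjointb (w :: xs) ys then 1 else 0))).

Lemma qq_nonneg w : 0 <= qq w.
Proof. unfold qq. apply Rle_trans with (sumseq n r (fun _ => 0)); [rewrite sumseq_zero; lra|]. apply sumseq_le_len; intros.
  apply Rle_trans with (sumseq n r (fun _ => 0)); [rewrite sumseq_zero; lra|]. apply sumseq_le_len; intros. apply Rmult_le_pos.
  apply Rmult_le_pos; apply wt_nonneg. destruct (disjointb _ _); lra. Qed.

Lemma nonint_eq : nonint_prob n adj r = rsum n (fun u => pi_ n adj u * qq u).
Proof. reflexivity. Qed.

Lemma mix_after s w : (w < n)%nat -> pt n adj (s + T) w w <= 3/2 * pi_ n adj w.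
Proof. intros Hw. rewrite pt_CK by auto.
  apply Rle_trans with (rsum n (fun z => 3/2 * pi_ n adj w * pt n adj s w z)).
  apply rsum_le_in; intros z Hz. rewrite Rmult_comm. apply Rmult_le_compat_r. apply pt_nonneg. auto.
  rewrite rsum_scal, pt_rowsum by auto. lra. Qed.

Definition L := (r + T)%nat.

Lemma Qf_Gs i j w : (i <= T)%nat -> (j <= T)%nat -> (w < n)%nat -> Qf n adj L i j (Gs r) w = qq w.
Proof. intros Hi Hj Hw. unfold Qf, qq.
  set (H := fun a b => if disjointb (w :: a) b then 1 else 0).
  set (Psi := fun a => sumseq n r (fun t2 => wt n adj w t2 * H a t2)).
  transitivity (sumseq n (L - i) (fun t1 => wt n adj w t1 * Psi (firstn r t1))).
  - apply sumseq_ext; intros t1. unfold Psi.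
    replace (L - j)%nat with (r + (L - j - r))%nat by (unfold L; lia).
    rewrite <- (marg n adj r (L - j - r) w (fun b => H (firstn r t1) b)) by auto.
    rewrite <- sumseq_scal. apply sumseq_ext; intros t2. unfold Gs, H. lra.
  - replace (L - i)%nat with (r + (L - i - r))%nat by (unfold L; lia).
    rewrite (marg n adj r (L - i - r) w Psi) by auto.
    apply sumseq_ext; intros t1. unfold Psi. rewrite <- sumseq_scal. apply sumseq_ext; intros; unfold H; lra.
Qed.

Lemma Qf_Gone i j w : (i <= L)%nat -> (j <= L)%nat -> (w < n)%nat -> Qf n adj L i j Gone w = 1.
Proof. intros Hi Hj Hw. unfold Qf, Gone.
  rewrite (sumseq_ext n (L - i) _ (fun t1 => wt n adj w t1 * sumseq n (L - j) (fun t2 => wt n adj w t2))).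
  rewrite (wt_sum n adj (L - j) w) by auto.
  rewrite (sumseq_ext n (L - i) _ (fun t1 => wt n adj w t1)) by (intros; lra). apply wt_sum; auto.
  intros. rewrite <- sumseq_scal. apply sumseq_ext; intros; lra. Qed.

Lemma short_bound t i : (t <= T)%nat -> (i <= t)%nat ->
  Ex n adj L (term i (t - i) (Gs r)) <= rmax n (fun v => pt n adj t v v) * nonint_prob n adj r.
Proof. intros Ht Hi. unfold term. rewrite ML by (auto; unfold L; lia).
  rewrite nonint_eq, <- rsum_scal. apply rsum_le_in; intros w Hw.
  replace (i + (t - i))%nat with t by lia. rewrite Qf_Gs by (auto; lia).
  pose proof (rmax_ge n (fun v => pt n adj t v v) w Hw). simpl in H.
  pose proof (pi_nonneg n adj w). pose proof (qq_nonneg w).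
  replace (rmax n (fun v => pt n adj t v v) * (pi_ n adj w * qq w)) with
     (pi_ n adj w * rmax n (fun v => pt n adj t v v) * qq w) by ring.
  apply Rmult_le_compat_r; auto. apply Rmult_le_compat_l; auto. Qed.

Lemma long_bound i j : (i <= L)%nat -> (j <= L)%nat ->
  Ex n adj L (fun X Y => if Nat.ltb T (i + j) then term i j Gone X Y else 0) <= 3/2 * (D / INR n).
Proof. intros Hi Hj.
  assert (0 <= D / INR n) by (eapply Rle_trans; [apply (pi_nonneg n adj 0)| apply Hpi; auto]).
  destruct (Nat.ltb_spec T (i + j)).
  - unfold term. rewrite ML by auto.
    apply Rle_trans with (rsum n (fun w => pi_ n adj w * (3/2 * (D / INR n)))).
    apply rsum_le_in; intros w Hw. rewrite Qf_Gone by auto. rewrite Rmult_1_r.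
    apply Rmult_le_compat_l. apply pi_nonneg.
    replace (i + j)%nat with ((i + j - T) + T)%nat by lia.
    eapply Rle_trans. apply mix_after; auto. pose proof (Hpi w Hw). lra.
    rewrite (rsum_ext_in n _ (fun w => (3/2 * (D / INR n)) * pi_ n adj w)) by (intros; lra).
    rewrite rsum_scal, pi_sum by auto. lra.
  - rewrite Ex_zero. lra. Qed.

Lemma key : 1 <= bubble n adj T * nonint_prob n adj r + INR (S L) * (INR (S L) * (3/2 * (D / INR n))).
Proof.
  rewrite <- (Ex_one n adj L) by auto.
  eapply Rle_trans. apply (Ex_mono n adj L _ (fun X Y => Bs T r X Y + Bl T L X Y)).
  intros; apply comb; auto.
  rewrite Ex_plus. apply Rplus_le_compat.
  - unfold Bs. rewrite (Ex_rsum n adj L (S T) (fun t X Y => rsum (S t) (fun i => term i (t - i) (Gs r) X Y))).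
    unfold bubble. rewrite Rmult_comm, <- rsum_scal. apply rsum_le_in; intros t Ht.
    rewrite (Ex_rsum n adj L (S t) (fun i X Y => term i (t - i) (Gs r) X Y)).
    apply Rle_trans with (rsum (S t) (fun _ => rmax n (fun v => pt n adj t v v) * nonint_prob n adj r)).
    apply rsum_le_in; intros i Hi. apply short_bound; lia.
    rewrite rsum_const. lra.
  - unfold Bl. rewrite (Ex_rsum n adj L (S L) (fun i X Y => rsum (S L) (fun j => if Nat.ltb T (i + j) then term i j Gone X Y else 0))).
    rewrite <- rsum_const. apply rsum_le_in; intros i Hi.
    rewrite (Ex_rsum n adj L (S L) (fun j X Y => if Nat.ltb T (i + j) then term i j Gone X Y else 0)).
    rewrite <- rsum_const. apply rsum_le_in; intros j Hj. apply long_bound; lia.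
Qed.

End K.

Lemma Rpower_gt0 x y : 0 < Rpower x y.
Proof. unfold Rpower. apply exp_pos. Qed.

Lemma INR_Z2Nat z : (0 <= z)%Z -> INR (Z.to_nat z) = IZR z.
Proof. intros. rewrite INR_IZR_INZ, Z2Nat.id; auto. Qed.

Lemma asym D alpha : 0 < D -> 0 < alpha -> exists N0 : nat, forall n : nat, (N0 <= n)%nat ->
  (2 <= n)%nat /\ forall x : R, 0 <= x -> x <= Rpower (INR n) (/2 - alpha/3) ->
   (2*x+1)*(2*x+1)*(3/2*(D/INR n)) <= 1/2.
Proof. intros HD Ha. set (g := Rmin (alpha/3) (1/4)).
  assert (Hg : 0 < g /\ g <= alpha/3 /\ g <= 1/4).
  { unfold g. split; [apply Rmin_glb_lt; lra|split; [apply Rmin_l|apply Rmin_r]]. }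
  set (K := Rpower (27 * D) (/ (2 * g))).
  exists (Nat.max 2 (Z.to_nat (up K))). intros n Hn. split; [lia|].
  intros x Hx0 Hx.
  assert (HKp : 0 < K) by apply Rpower_gt0.
  assert (HupK : (0 <= up K)%Z). { destruct (archimed K). apply le_IZR. lra. }
  assert (HnK : K < INR n).
  { destruct (archimed K). apply Rlt_le_trans with (IZR (up K)); [lra|].
    rewrite <- INR_Z2Nat by auto. apply le_INR. lia. }
  assert (Hn1 : 1 <= INR n) by (apply (le_INR 1); lia).
  assert (Hnp : 0 < INR n) by lra.
  set (y := Rpower (INR n) (/2 - g)).
  assert (Hxy : x <= y). { eapply Rle_trans; [apply Hx|]. apply Rle_Rpower; auto; lra. }
  assert (Hy1 : 1 <= y). { unfold y. rewrite <- (Rpower_O (INR n)) by lra. apply Rle_Rpower; auto; lra. }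
  assert (H2g : 27 * D <= Rpower (INR n) (2 * g)).
  { replace (27 * D) with (Rpower K (2 * g)).
    apply Rle_Rpower_l; lra.
    unfold K. rewrite Rpower_mult. replace (/ (2 * g) * (2 * g)) with 1 by (field; lra).
    apply Rpower_1; lra. }
  assert (Hnyy : INR n = y * y * Rpower (INR n) (2 * g)).
  { unfold y. rewrite <- !Rpower_plus. replace (/ 2 - g + (/ 2 - g) + 2 * g) with 1 by field.
    rewrite Rpower_1; lra. }
  assert (H3 : (2*x+1)*(2*x+1) <= 9 * (y * y)) by nra.
  set (P := Rpower (INR n) (2 * g)) in *.
  assert (HP : 0 < P) by apply Rpower_gt0.
  apply Rle_trans with (9 * (y * y) * (3/2 * (D / INR n))).
  apply Rmult_le_compat_r; auto. apply Rmult_le_pos; [lra|]. unfold Rdiv; apply Rmult_le_pos; [lra|].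
  left; apply Rinv_0_lt_compat; lra.
  rewrite Hnyy. assert (0 < y * y) by nra.
  assert (E : 9*(y*y)*(3/2*(D/(y*y*P))) = 27/2*D/P) by (field; lra). rewrite E.
  assert (Ht : 27/2*D/P * P = 27/2*D) by (field; lra).
  set (t := 27/2*D/P) in *. destruct (Rle_lt_dec t (1/2)); auto.
  assert ((t - 1/2) * P > 0) by (apply Rmult_lt_0_compat; lra). nra.
Qed.

Lemma degpos_of_conn n adj : (2 <= n)%nat -> connected n adj -> degpos n adj.
Proof. intros Hn2 [_ Hc] v Hv. set (v' := if Nat.eqb v 0 then 1%nat else 0%nat).
  assert (Hv' : (v' < n)%nat) by (unfold v'; destruct (Nat.eqb v 0); lia).
  assert (Hne : v <> v') by (unfold v'; destruct (Nat.eqb_spec v 0); lia).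
  pose proof (clos_rt_rt1n _ _ _ _ (Hc v v' Hv Hv')) as H.
  inversion H as [Heq|]. contradiction.
  match goal with Hs : (_ < n)%nat /\ (?y < n)%nat /\ adj v ?y = true |- _ => destruct Hs as [Hx [Hy Ha]]; rename y into yy end.
  unfold deg. assert (In yy (filter (fun w => adj v w) (seq 0 n))).
  { apply filter_In. split; auto. apply in_seq; lia. }
  destruct (filter (fun w => adj v w) (seq 0 n)); simpl in *; [contradiction|lia]. Qed.

Theorem mainTheorem6 :
  forall D alpha theta : R, 0 < D -> 0 < alpha -> 0 < theta ->
  exists c : R, 0 < c /\
  exists N0 : nat, forall (n : nat) (adj : nat -> nat -> bool),
    (N0 <= n)%nat ->
    simple_graph n adj ->
    connected n adj ->
    (* (bal) Delta(G) / delta(G) <= D *)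
    (forall u v, (u < n)%nat -> (v < n)%nat ->
        INR (deg n adj u) <= D * INR (deg n adj v)) ->
    (* (mix) and (esc), with T the uniform mixing time *)
    (exists T : nat, is_tmix n adj T /\
        INR T <= Rpower (INR n) (/ 2 - alpha) /\
        bubble n adj T <= theta) ->
    nonint_prob n adj (run_time n alpha) >= c.
Proof.
  intros D alpha theta HD Ha Hth. exists (1 / (2 * theta)). split.
  { unfold Rdiv. rewrite Rmult_1_l. apply Rinv_0_lt_compat. lra. }
  destruct (asym D alpha HD Ha) as [N0 HN0]. exists N0.
  intros n adj Hn [Hsym Hirr] Hconn Hbal [T [[Hmixed Hleast] [HT Hbub]]].
  destruct (HN0 n Hn) as [Hn2 Hasy].
  assert (Hd : degpos n adj) by (apply degpos_of_conn; auto).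
  assert (Hn0 : (0 < n)%nat) by lia.
  assert (HtE : 0 < twoE n adj) by (apply twoE_pos; auto).
  assert (Hpipos : forall w, (w < n)%nat -> 0 < pi_ n adj w).
  { intros w Hw. unfold pi_. apply Rdiv_lt_0_compat; auto. apply lt_0_INR; auto. }
  assert (Hmix : forall z w, (z < n)%nat -> (w < n)%nat -> pt n adj T z w <= 3/2 * pi_ n adj w).
  { intros z w Hz Hw. pose proof (Hmixed z w Hz Hw) as Hm. pose proof (Hpipos w Hw).
    pose proof (Rle_abs (pt n adj T z w / pi_ n adj w - 1)) as Hm2.
    assert (pt n adj T z w / pi_ n adj w * pi_ n adj w = pt n adj T z w) by (field; lra).
    set (q := pt n adj T z w / pi_ n adj w) in *. nra. }
  assert (Hnp : 0 < INR n) by (apply lt_0_INR; lia).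
  assert (Hpi : forall w, (w < n)%nat -> pi_ n adj w <= D / INR n).
  { intros w Hw. unfold pi_.
    assert (Hdw : 0 < INR (deg n adj w)) by (apply lt_0_INR; auto).
    assert (HE : INR n * (INR (deg n adj w) / D) <= twoE n adj).
    { unfold twoE. rewrite <- rsum_const. apply rsum_le_in; intros v Hv.
      pose proof (Hbal w v Hw Hv). apply Rmult_le_reg_l with D; auto.
      replace (D * (INR (deg n adj w) / D)) with (INR (deg n adj w)) by (field; lra). lra. }
    replace (INR (deg n adj w) / twoE n adj) with ((INR (deg n adj w) * INR n) / (twoE n adj * INR n)) by (field; lra).
    replace (D / INR n) with ((D * twoE n adj) / (twoE n adj * INR n)) by (field; lra).
    unfold Rdiv. apply Rmult_le_compat_r. left; apply Rinv_0_lt_compat; nra.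
    assert (INR n * INR (deg n adj w) <= D * twoE n adj); [|lra].
    replace (INR n * INR (deg n adj w)) with (D * (INR n * (INR (deg n adj w) / D))) by (field; lra).
    apply Rmult_le_compat_l; lra. }
  pose proof (key n adj D T (run_time n alpha) Hsym Hd Hn0 Hmix Hpi) as K.
  set (r := run_time n alpha) in *.
  set (x := Rpower (INR n) (/ 2 - alpha / 3)).
  assert (Hx0 : 0 < x) by apply Rpower_gt0.
  assert (Hn1 : 1 <= INR n) by (apply (le_INR 1); lia).
  assert (Hrx : INR r <= x).
  { unfold r, run_time. fold x. destruct (Z_le_gt_dec 0 (Int_part x)).
    rewrite INR_Z2Nat by auto. apply base_Int_part.
    replace (Z.to_nat (Int_part x)) with 0%nat by lia. simpl; lra. }
  assert (HTr : (T <= r)%nat).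
  { assert (HTx : INR T <= x). { eapply Rle_trans; [apply HT|]. apply Rle_Rpower; auto; lra. }
    destruct (archimed x) as [Hup _].
    assert (Z.of_nat T < up x)%Z. { apply lt_IZR. rewrite <- INR_IZR_INZ. lra. }
    unfold r, run_time. fold x. unfold Int_part. lia. }
  assert (HSL : INR (S (L T r)) <= 2 * x + 1).
  { unfold L. rewrite S_INR, plus_INR. assert (INR T <= INR r) by (apply le_INR; auto). lra. }
  pose proof (Hasy x (Rlt_le _ _ Hx0) (Rle_refl _)) as Hs.
  assert (Hc : 0 <= 3/2 * (D / INR n)).
  { apply Rmult_le_pos; [lra|]. unfold Rdiv; apply Rmult_le_pos; [lra|]. left; apply Rinv_0_lt_compat; lra. }
  assert (HSL0 : 0 <= INR (S (L T r))) by apply pos_INR.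
  assert (INR (S (L T r)) * (INR (S (L T r)) * (3/2 * (D / INR n))) <= 1/2).
  { eapply Rle_trans; [|apply Hs]. rewrite <- Rmult_assoc.
    apply Rmult_le_compat_r; auto. apply Rmult_le_compat; auto. }
  assert (HP : 0 <= nonint_prob n adj r).
  { unfold nonint_prob. apply rsum_nonneg; intros. apply Rmult_le_pos. apply pi_nonneg.
    apply (qq_nonneg n adj r). }
  assert (bubble n adj T * nonint_prob n adj r <= theta * nonint_prob n adj r)
    by (apply Rmult_le_compat_r; auto).
  apply Rle_ge. apply Rmult_le_reg_l with (2 * theta). lra.
  replace (2 * theta * (1 / (2 * theta))) with 1 by (field; lra). lra.
Qed.
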